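(* Let $\mathcal G$ be a graph. An agglomeration $a\in\mathbf A(\mathcal G)$ is an atom of $\mathbf A(\mathcal G)$ if and only if $a=\mathbf 1_{\mathcal G'}$ for a non-null, connected subgraph $\mathcal G'$ of $\mathcal G$.
   Context: A graph $\mathcal G=(V,E,r)$ consists of a finite vertex set $V$, a finite edge set $E$ disjoint from $V$, and a map $r$ assigning to each edge a two-element subset of $V$; multiple edges allowed, no loops. An agglomeration on $\mathcal G$ is a function $a\colon V\cup E\to\mathbb N_0$ with $a(v)\ge a(e)$ whenever $v$ is incident with $e$; $\mathbf A(\mathcal G)$ is the monoid of agglomerations under pointwise addition. For a subgraph $\mathcal G'$, $\mathbf 1_{\mathcal G'}$ is $1$ on vertices and edges of $\mathcal G'$ and $0$ elsewhere. An atom is a nonzero element that cannot be written as a sum of two nonzero elements. *)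

(* Defs.v *)
From mathcomp Require Import all_boot.
Set Implicit Arguments. Unset Strict Implicit. Unset Printing Implicit Defensive.

(* A graph: finite vertex type V, finite edge type E, and r : E -> {set V}
   assigning to each edge a two-element subset of V (multigraph, no loops). *)
Definition graph_ok (V E : finType) (r : E -> {set V}) : Prop :=
  forall e, #|r e| = 2.

(* A function on V ∪ E with values in N_0, represented by a pair of finite
   functions (values on vertices, values on edges). *)
Definition vfun (V E : finType) : Type := ({ffun V -> nat} * {ffun E -> nat})%type.

Definition is_agglomeration (V E : finType) (r : E -> {set V}) (a : vfun V E) : Prop :=
  forall v e, v \in r e -> a.2 e <= a.1 v.

Definition vfun_add (V E : finType) (a b : vfun V E) : vfun V E :=
  ([ffun v => a.1 v + b.1 v], [ffun e => a.2 e + b.2 e]).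

Definition vfun_zero (V E : finType) : vfun V E := ([ffun _ => 0], [ffun _ => 0]).

Definition is_atom (V E : finType) (r : E -> {set V}) (a : vfun V E) : Prop :=
  is_agglomeration r a /\ a <> vfun_zero V E /\
  forall b c, is_agglomeration r b -> is_agglomeration r c ->
    a = vfun_add b c -> b = vfun_zero V E \/ c = vfun_zero V E.

Definition is_subgraph (V E : finType) (r : E -> {set V}) (V' : {set V}) (E' : {set E}) : Prop :=
  forall e, e \in E' -> r e \subset V'.

Definition sub_adj (V E : finType) (r : E -> {set V}) (E' : {set E}) : rel V :=
  fun u v => [exists e in E', (u \in r e) && (v \in r e)].

Definition sub_connected (V E : finType) (r : E -> {set V}) (V' : {set V}) (E' : {set E}) : Prop :=
  forall u v, u \in V' -> v \in V' -> connect (sub_adj r E') u v.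

Definition indicator (V E : finType) (V' : {set V}) (E' : {set E}) : vfun V E :=
  ([ffun v => nat_of_bool (v \in V')], [ffun e => nat_of_bool (e \in E')]).

(* Main.v *)
Require Import Defs.
From mathcomp Require Import all_boot.
From mathcomp Require Import zify.

Section Helpers.
Variables (V E : finType) (r : E -> {set V}).

Lemma vfunP (a b : vfun V E) :
  (forall v, a.1 v = b.1 v) -> (forall e, a.2 e = b.2 e) -> a = b.
Proof.
case: a b => [a1 a2] [b1 b2] /= h1 h2.
have -> : a1 = b1 by apply/ffunP.
by have -> : a2 = b2 by apply/ffunP.
Qed.

Lemma agg_zero (hr : graph_ok r) (b : vfun V E) :
  is_agglomeration r b -> (forall v, b.1 v = 0) -> b = vfun_zero V E.
Proof.
move=> hb h0; apply: vfunP => [v|e]; rewrite /vfun_zero /= ffunE //.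
have : 0 < #|r e| by rewrite hr.
case/card_gt0P => v hv.
by have := hb v e hv; rewrite h0; case: (b.2 e).
Qed.

Lemma indicator_ne0 (A : {set V}) (F : {set E}) x :
  x \in A -> indicator A F <> vfun_zero V E.
Proof.
move=> hx h; have := congr1 (fun p : vfun V E => p.1 x) h => /=.
by rewrite !ffunE hx.
Qed.

End Helpers.

Theorem proposition4p5 (V E : finType) (r : E -> {set V}) (hr : graph_ok r)
    (a : vfun V E) (ha : is_agglomeration r a) :
  is_atom r a <->
  exists (V' : {set V}) (E' : {set E}),
    [/\ is_subgraph r V' E', V' != set0, sub_connected r V' E'
      & a = indicator V' E'].
Proof.
split.
- case=> _ [hnz hsplit].
  set V' := [set v | 0 < a.1 v].
  set E' := [set e | 0 < a.2 e].
  pose c : vfun V E := ([ffun v => (a.1 v).-1], [ffun e => (a.2 e).-1]).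
  have hb : is_agglomeration r (indicator V' E').
    move=> v e hv /=; rewrite !ffunE !inE.
    have := ha v e hv; case: (a.1 v) => [|x]; case: (a.2 e) => [|y] //.
  have hc : is_agglomeration r c.
    move=> v e hv /=; rewrite !ffunE.
    have := ha v e hv; case: (a.1 v) => [|x]; case: (a.2 e) => [|y] //.
  have hsum : a = vfun_add (indicator V' E') c.
    apply: vfunP => [v|e]; rewrite /= !ffunE !inE.
      by case: (a.1 v).
    by case: (a.2 e).
  have hsub : is_subgraph r V' E'.
    move=> e; rewrite inE => he; apply/subsetP => v hv.
    rewrite inE; exact: leq_trans he (ha v e hv).
  case: (hsplit _ _ hb hc hsum) => hz.
    exfalso; apply: hnz; apply: agg_zero => // v.
    have := congr1 (fun p : vfun V E => p.1 v) hz; rewrite /= !ffunE inE.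
    by case: (a.1 v).
  have haE : a = indicator V' E'.
    apply: vfunP => [v|e]; rewrite /= !ffunE !inE.
      have := congr1 (fun p : vfun V E => p.1 v) hz; rewrite /= !ffunE.
      by case: (a.1 v) => [|[|x]].
    have := congr1 (fun p : vfun V E => p.2 e) hz; rewrite /= !ffunE.
    by case: (a.2 e) => [|[|x]].
  exists V', E'; split => //.
  + apply/set0Pn.
    case: (boolP [exists v, 0 < a.1 v]) => [/existsP [v hv]|/existsPn hn].
      by exists v; rewrite inE.
    exfalso; apply: hnz; apply: agg_zero => // v.
    by have := hn v; case: (a.1 v).
  + clearbody V' E'; move=> u w hu hw; apply: contraT => hnc; exfalso.
    set C := [set x in V' | connect (sub_adj r E') u x].
    set EC := [set e in E' | r e \subset C].
    have hCV : C \subset V' by apply/subsetP => x; rewrite inE => /andP[].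
    have hECE : EC \subset E' by apply/subsetP => x; rewrite inE => /andP[].
    have hb' : is_agglomeration r (indicator C EC).
      move=> v e hv /=; rewrite !ffunE.
      case heC: (e \in EC) => //=.
      by move: heC; rewrite inE => /andP[_ /subsetP ->].
    have hc' : is_agglomeration r (indicator (V' :\: C) (E' :\: EC)).
      move=> v e hv /=; rewrite !ffunE.
      case heC: (e \in E' :\: EC) => //=.
      move: heC; rewrite in_setD => /andP[hnEC he'].
      have hvV : v \in V' := subsetP (hsub e he') v hv.
      rewrite in_setD hvV andbT.
      suff -> : v \notin C by [].
      apply/negP => hvC; move/negP: hnEC; apply; rewrite inE; apply/andP; split => //.
      move: hvC; rewrite inE => /andP[_ huv].
      apply/subsetP => x hx.
      have hxV := subsetP (hsub e he') x hx.
      rewrite inE; apply/andP; split => //.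
      apply: connect_trans huv (connect1 _).
      by apply/existsP; exists e; rewrite he' hv hx.
    have hsum' : a = vfun_add (indicator C EC) (indicator (V' :\: C) (E' :\: EC)).
      rewrite haE; apply: vfunP => [v|e]; rewrite /= !ffunE !in_setD.
        case hvC: (v \in C); last by case: (v \in V').
        by have := subsetP hCV v hvC => ->.
      case heC: (e \in EC); last by case: (e \in E').
      by have := subsetP hECE e heC => ->.
    case: (hsplit _ _ hb' hc' hsum').
      apply: (@indicator_ne0 V E _ _ u).
      by rewrite inE; apply/andP; split.
    apply: (@indicator_ne0 V E _ _ w).
    rewrite in_setD hw andbT; rewrite inE; apply/negP => /andP [_ h].
    by rewrite h in hnc.
- case=> V' [E' [hsub hne hconn eqa]]; subst a.
  split => //; split.
    by case/set0Pn: hne => x hx; apply: (@indicator_ne0 V E _ _ x).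
  move=> b c hb hc heq.
  have hv x : nat_of_bool (x \in V') = b.1 x + c.1 x.
    by have := congr1 (fun p : vfun V E => p.1 x) heq; rewrite /= !ffunE.
  have he x : nat_of_bool (x \in E') = b.2 x + c.2 x.
    by have := congr1 (fun p : vfun V E => p.2 x) heq; rewrite /= !ffunE.
  case: (boolP [exists v, b.1 v != 0]); last first.
    move=> /existsPn hn; left; apply: agg_zero => // v.
    by apply/eqP; have := hn v; rewrite negbK.
  case/existsP => u hu.
  case: (boolP [exists v, c.1 v != 0]); last first.
    move=> /existsPn hn; right; apply: agg_zero => // v.
    by apply/eqP; have := hn v; rewrite negbK.
  case/existsP => w hw; exfalso.
  have inV x : b.1 x != 0 \/ c.1 x != 0 -> x \in V'.
    move=> h; have := hv x; case: (x \in V') => //= h0; case: h => /eqP h; lia.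
  have hu' := inV u (or_introl hu).
  have hw' := inV w (or_intror hw).
  have hcl : closed (sub_adj r E') [set x | b.1 x != 0].
    move=> x y /existsP [e /andP [heE /andP [hx hy]]].
    have hx' : x \in V' := subsetP (hsub e heE) x hx.
    have hy' : y \in V' := subsetP (hsub e heE) y hy.
    have := he e; have := hv x; have := hv y; rewrite heE hx' hy' /=.
    have := hb x e hx; have := hb y e hy; have := hc x e hx; have := hc y e hy.
    rewrite !inE /=. lia.
  have := closed_connect hcl (hconn u w hu' hw').
  rewrite !inE hu => /esym hbw.
  have := hv w; rewrite hw' /=; move: hbw hw; lia.
Qed.
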